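(* Let $N\ge 1$ and let $\mathcal{P}$ be the set of $M:=N(N+1)/2$ pairs $(i,j)$ with $1\le i\le j\le N$. For $p\in\mathcal{P}$ let $g_p\in\mathbb{R}$, $K_p\in[0,1]$, $a_p:=g_p^2K_p(1-K_p)$, $Z:=\sum_p\sqrt{a_p}$, and assume $\sum_p a_p>0$. For a budget $B>0$ let $\mathrm{Var}_\star:=Z^2/B$ (the minimum of $\sum_p a_p/s_p$ subject to $\sum_p s_p\le B$, $s_p\ge0$) and $\mathrm{Var}_{\mathrm{unif}}:=\sum_p a_p/(B/M)$ (the value under the uniform allocation $s_p=B/M$). Then $$\rho:=\frac{\mathrm{Var}_\star}{\mathrm{Var}_{\mathrm{unif}}}=\frac{Z^2}{M\sum_p a_p}\le 1,$$ with equality if and only if all $a_p$ are equal. Moreover, suppose the $g_p$ are the kernel ridge regression gradients: $K\in\mathbb{R}^{N\times N}$ is symmetric positive semi-definite with entries $K_{ij}=K_p\in[0,1]$, $\lambda>0$, $y\in\mathbb{R}^N$, $\alpha=(K+\lambda I)^{-1}y$, $\beta=(K+\lambda I)^{-1}\alpha$, and $g_{ij}=-2\lambda^2(\beta_i\alpha_j+\beta_j\alpha_i)$. If $\alpha$ is supported on a set $S\subset\{1,\dots,N\}$ with $|S|=m$, then $g$ is supported on $\mathcal{P}_S:=\{(i,j)\in\mathcal{P}: i\in S\text{ or }j\in S\}$, which has cardinality $|\mathcal{P}_S|=m(2N-m+1)/2$, and therefore $$\rho\le\frac{|\mathcal{P}_S|}{M}=\frac{m(2N-m+1)}{N(N+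1)}\approx\frac{2m}{N+1}.$$
   Context: $\rho$ compares the optimal pair-level shot allocation with uniform allocation for the first-order variance $\sum_p a_p/s_p$ of a loss evaluated at Bernoulli-mean kernel estimates with $\mathrm{Var}[\hat K_p]=K_p(1-K_p)/s_p$. *)

(* Defs.v *)
From mathcomp Require Import all_boot all_order all_algebra.
Set Implicit Arguments. Unset Strict Implicit. Unset Printing Implicit Defensive.
Import Order.TTheory GRing.Theory Num.Theory.
Local Open Scope ring_scope.

Section Defs.
Variable R : rcfType.
Variable N : nat.

Definition pairs : {set 'I_N * 'I_N} := [set p : 'I_N * 'I_N | (p.1 <= p.2)%N].

Definition Mn : nat := (N * N.+1) %/ 2.

Definition acoef (g Kp : 'I_N * 'I_N -> R) (p : 'I_N * 'I_N) : R :=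
  g p ^+ 2 * Kp p * (1 - Kp p).

Definition Zs (g Kp : 'I_N * 'I_N -> R) : R :=
  \sum_(p in pairs) Num.sqrt (acoef g Kp p).

Definition Var_star (g Kp : 'I_N * 'I_N -> R) (B : R) : R := Zs g Kp ^+ 2 / B.

Definition Var_unif (g Kp : 'I_N * 'I_N -> R) (B : R) : R :=
  \sum_(p in pairs) acoef g Kp p / (B / Mn%:R).

Definition rho (g Kp : 'I_N * 'I_N -> R) (B : R) : R :=
  Var_star g Kp B / Var_unif g Kp B.

Definition psd (K : 'M[R]_N) : Prop :=
  forall v : 'cV[R]_N, 0 <= (v^T *m K *m v) 0 0.

Definition krr_alpha (K : 'M[R]_N) (lam : R) (y : 'cV[R]_N) : 'cV[R]_N :=
  invmx (K + lam%:M) *m y.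

Definition krr_beta (K : 'M[R]_N) (lam : R) (y : 'cV[R]_N) : 'cV[R]_N :=
  invmx (K + lam%:M) *m krr_alpha K lam y.

Definition krr_grad (K : 'M[R]_N) (lam : R) (y : 'cV[R]_N) (p : 'I_N * 'I_N) : R :=
  let a := krr_alpha K lam y in let b := krr_beta K lam y in
  - 2 * lam ^+ 2 * (b p.1 0 * a p.2 0 + b p.2 0 * a p.1 0).

Definition pairs_S (S : {set 'I_N}) : {set 'I_N * 'I_N} :=
  [set p in pairs | (p.1 \in S) || (p.2 \in S)].

End Defs.

(* Main.v *)
Require Import Defs.
From mathcomp Require Import all_boot all_order all_algebra.
From mathcomp Require Import zify ring lra.
Import Order.TTheory GRing.Theory Num.Theory.
Local Open Scope ring_scope.

Lemma card_within N (T : {set 'I_N}) :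
  (#|[set p in pairs N | (p.1 \in T) && (p.2 \in T)]| * 2 = #|T| * #|T|.+1)%N.
Proof.
set A := [set _ in _ | _].
have cA : #|A| = (\sum_(i : 'I_N) \sum_(j : 'I_N) ((i \in T) && (j \in T) && (i <= j)%N : nat))%N.
  rewrite pair_bigA -sum1_card big_mkcond /=.
  apply: eq_bigr => [[i j]] _.
  by rewrite !inE /=; case: (i <= j)%N; case: (i \in T); case: (j \in T).
have cT : #|T| = (\sum_(j : 'I_N) (j \in T : nat))%N.
  by rewrite -sum1_card big_mkcond /=; apply: eq_bigr => j _; case: (j \in T).
rewrite cA muln2 -addnn {2}exchange_big /= -big_split /=.
transitivity (\sum_(i : 'I_N) ((i \in T : nat) * #|T| + (i \in T : nat)))%N.
  apply: eq_bigr => i _.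
  have h1 : (i \in T : nat) = (\sum_(j < N) ((i \in T) && (j == i) : nat))%N.
    rewrite (bigD1 i) //= eqxx big1 ?addn0 ?andbT // => j /negbTE ->.
    by rewrite andbF.
  rewrite {2}h1 cT big_distrr /= -!big_split /=; apply: eq_bigr => j _.
  case: (ltngtP i j) => [h|h|h].
  - rewrite (_ : (j == i) = false); last by apply/negbTE; rewrite neq_ltn h orbT.
    by case: (i \in T); case: (j \in T).
  - rewrite (_ : (j == i) = false); last by apply/negbTE; rewrite neq_ltn h.
    by case: (i \in T); case: (j \in T).
  - rewrite (val_inj h) eqxx.
    by case: (j \in T).
rewrite big_split /= -big_distrl /= -cT mulnSr //.
Qed.
Lemma cs_id (R : realFieldType) (T : finType) (A : {set T}) (s : T -> R) :
  \sum_(p in A) \sum_(q in A) (s p - s q) ^+ 2 =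
  2 * (#|A|%:R * \sum_(p in A) s p ^+ 2 - (\sum_(p in A) s p) ^+ 2).
Proof.
transitivity (\sum_(p in A) (#|A|%:R * s p ^+ 2 + \sum_(q in A) s q ^+ 2
                 - 2 * s p * \sum_(q in A) s q)).
  apply: eq_bigr => p _.
  rewrite (eq_bigr (fun q => s p ^+2 + s q ^+2 - 2 * s p * s q)); last by move=> q _; ring.
  rewrite sumrB big_split /= sumr_const -mulr_sumr -mulr_natl; ring.
rewrite sumrB big_split /= sumr_const -mulr_suml -mulr_sumr -mulr_sumr -(mulr_natl (\sum_(q in A) s q ^+ 2)); ring.
Qed.

Lemma cs_le (R : realFieldType) (T : finType) (A : {set T}) (s : T -> R) :
  (\sum_(p in A) s p) ^+ 2 <= #|A|%:R * \sum_(p in A) s p ^+ 2.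
Proof.
have : 0 <= \sum_(p in A) \sum_(q in A) (s p - s q) ^+ 2.
  by apply: sumr_ge0 => p _; apply: sumr_ge0 => q _; apply: sqr_ge0.
rewrite cs_id; nra.
Qed.

Lemma cs_eq (R : realFieldType) (T : finType) (A : {set T}) (s : T -> R) :
  (\sum_(p in A) s p) ^+ 2 = #|A|%:R * \sum_(p in A) s p ^+ 2 <->
  (forall p q, p \in A -> q \in A -> s p = s q).
Proof.
split.
  move=> h.
  have : \sum_(p in A) \sum_(q in A) (s p - s q) ^+ 2 = 0 by rewrite cs_id h subrr mulr0.
  move/psumr_eq0P => H p q pA qA.
  have H0 : forall i, i \in A -> 0 <= \sum_(q in A) (s i - s q) ^+ 2.
    by move=> i _; apply: sumr_ge0 => j _; apply: sqr_ge0.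
  have /psumr_eq0P H2 := H H0 p pA.
  have := H2 (fun j _ => sqr_ge0 (s p - s j)) q qA.
  by move/eqP; rewrite sqrf_eq0 subr_eq0 => /eqP.
move=> h.
have : \sum_(p in A) \sum_(q in A) (s p - s q) ^+ 2 = 0.
  apply: big1 => p pA; apply: big1 => q qA; by rewrite (h p q) // subrr expr0n.
rewrite cs_id => /eqP; rewrite mulf_eq0 pnatr_eq0 /= subr_eq0 => /eqP.
done.
Qed.

Lemma card_pairs N : (#|pairs N| * 2 = N * N.+1)%N.
Proof.
have := @card_within N [set: 'I_N]; rewrite cardsT card_ord => <-.
have -> // : [set p in pairs N | (p.1 \in [set: 'I_N]) && (p.2 \in [set: 'I_N])] = pairs N.
apply/eqP; rewrite eqEsubset; apply/andP; split; apply/subsetP => p; rewrite !inE ?andbT //.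
Qed.

Lemma Mn_card N : Mn N = #|pairs N|.
Proof. by rewrite /Mn -card_pairs mulnK. Qed.

Lemma rho_eq (R : rcfType) N (g Kp : 'I_N * 'I_N -> R) B :
  (1 <= N)%N -> 0 < B -> \sum_(p in pairs N) acoef g Kp p != 0 ->
  rho g Kp B = Zs g Kp ^+ 2 / ((Mn N)%:R * \sum_(p in pairs N) acoef g Kp p).
Proof.
move=> N1 B0 S0.
have M0 : (Mn N)%:R != 0 :> R.
  rewrite pnatr_eq0 -lt0n /Mn divn_gt0 //.
  by rewrite (leq_trans (_ : 2 <= 1 * 2)%N) // leq_mul.
rewrite /rho /Var_star /Var_unif -mulr_suml.
field.
by rewrite M0 S0 (gt_eqF B0).
Qed.
Lemma part1 (R : rcfType) (N : nat) : (1 <= N)%N ->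
   forall (g Kp : 'I_N * 'I_N -> R) (B : R),
   (forall p, p \in pairs N -> 0 <= Kp p <= 1) ->
   0 < \sum_(p in pairs N) acoef g Kp p ->
   0 < B ->
   rho g Kp B = Zs g Kp ^+ 2 / ((Mn N)%:R * \sum_(p in pairs N) acoef g Kp p)
   /\ rho g Kp B <= 1
   /\ (rho g Kp B = 1 <->
       (forall p q, p \in pairs N -> q \in pairs N -> acoef g Kp p = acoef g Kp q)).
Proof.
move=> N1 g Kp B HK S0 B0.
have Hr := @rho_eq R N g Kp B N1 B0 (lt0r_neq0 S0).
have a0 : forall p, p \in pairs N -> 0 <= acoef g Kp p.
  move=> p /HK /andP [h1 h2]; rewrite /acoef.
  by apply: mulr_ge0; [apply: mulr_ge0 => //; apply: sqr_ge0 | rewrite subr_ge0].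
have Ssq : \sum_(p in pairs N) acoef g Kp p =
           \sum_(p in pairs N) (Num.sqrt (acoef g Kp p)) ^+ 2.
  by apply: eq_bigr => p /a0 h; rewrite sqr_sqrtr.
have Mpos : 0 < (Mn N)%:R * \sum_(p in pairs N) acoef g Kp p :> R.
  apply: mulr_gt0 => //; rewrite ltr0n /Mn divn_gt0 //.
  by rewrite (leq_trans (_ : 2 <= 1 * 2)%N) // leq_mul.
split => //; split.
  rewrite Hr ler_pdivrMr // mul1r Mn_card Ssq; exact: cs_le.
split.
  move=> h1 p q pP qP.
  have h2 : Zs g Kp ^+ 2 = (Mn N)%:R * \sum_(p in pairs N) acoef g Kp p.
    by rewrite -(divfK (lt0r_neq0 Mpos) (Zs g Kp ^+ 2)) -Hr h1 mul1r.
  move: h2; rewrite Mn_card Ssq => /cs_eq /(_ p q pP qP) h3.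
  by rewrite -(sqr_sqrtr (a0 p pP)) -(sqr_sqrtr (a0 q qP)) h3.
move=> h; rewrite Hr.
have -> : Zs g Kp ^+ 2 = (Mn N)%:R * \sum_(p in pairs N) acoef g Kp p.
  rewrite Mn_card Ssq; apply/cs_eq => p q pP qP; by rewrite (h p q).
by rewrite divff // lt0r_neq0.
Qed.

Lemma part2 (R : rcfType) (N : nat) : (1 <= N)%N ->
   forall (K : 'M[R]_N) (lam : R) (y : 'cV[R]_N) (B : R)
          (S : {set 'I_N}) (m : nat),
   K^T = K -> psd K ->
   (forall i j, 0 <= K i j <= 1) ->
   0 < lam ->
   let g := krr_grad K lam y in
   let Kp := fun p : 'I_N * 'I_N => K p.1 p.2 in
   0 < \sum_(p in pairs N) acoef g Kp p ->
   0 < B ->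
   (forall i, krr_alpha K lam y i 0 != 0 -> i \in S) ->
   #|S| = m ->
   (forall p, p \in pairs N -> p \notin pairs_S S -> g p = 0)
   /\ (#|pairs_S S| * 2 = m * (2 * N - m + 1))%N
   /\ rho g Kp B <= #|pairs_S S|%:R / (Mn N)%:R
   /\ #|pairs_S S|%:R / (Mn N)%:R = (m * (2 * N - m + 1))%:R / (N * (N + 1))%:R :> R.
Proof.
move=> N1 K lam y B S m _ _ HK lam0 g Kp S0 B0 Hal Hm.
have gz : forall p, p \in pairs N -> p \notin pairs_S S -> g p = 0.
  move=> p pP; rewrite inE pP /= negb_or => /andP [h1 h2].
  have z1 : krr_alpha K lam y p.1 0 = 0.
    by apply/eqP; case: eqP => // /eqP /Hal; rewrite (negbTE h1).
  have z2 : krr_alpha K lam y p.2 0 = 0.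
    by apply/eqP; case: eqP => // /eqP /Hal; rewrite (negbTE h2).
  by rewrite /g /krr_grad /= z1 z2 !mulr0 addr0 mulr0.
have cardP : (#|pairs_S S| * 2 = m * (2 * N - m + 1))%N.
  have e1 : pairs N :&: pairs_S S = pairs_S S.
    by apply/setIidPr/subsetP => p; rewrite !inE => /andP [].
  have e2 : pairs N :\: pairs_S S = [set p in pairs N | (p.1 \in ~: S) && (p.2 \in ~: S)].
    apply/eqP; rewrite eqEsubset; apply/andP; split; apply/subsetP => p;
      rewrite !inE; by case: (p.1 <= p.2)%N; case: (p.1 \in S); case: (p.2 \in S).
  have hc := cardsID (pairs_S S) (pairs N).
  rewrite e1 e2 in hc.
  have hw := @card_within N (~: S).
  have hp := card_pairs N.
  have hS : #|~: S| = (N - m)%N by rewrite cardsCs card_ord setCK Hm.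
  have mN : (m <= N)%N.
    by have := cardsC S; rewrite card_ord Hm => <-; apply: leq_addr.
  rewrite hS in hw.
  move: hc hw hp mN; set x := #|pairs_S S|; set w := #|[set _ in _ | _]|.
  move=> hc hw hp mN.
  move: hw hp; rewrite -hc; clear hc; move: x w => x w.
  have [k Nk] : exists k, N = (m + k)%N by exists (N - m)%N; lia.
  rewrite Nk (_ : (m + k - m = k)%N); last by lia.
  rewrite (_ : (2 * (m + k) - m + 1 = m + 2 * k + 1)%N); last by lia.
  move=> hw hp; nia.
split => //; split => //.
have Mpos : (0 < Mn N)%N.
  by rewrite /Mn divn_gt0 // (leq_trans (_ : 2 <= 1 * 2)%N) // leq_mul.
have M0 : (Mn N)%:R != 0 :> R by rewrite pnatr_eq0 -lt0n.
split; last first.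
  have hM : (Mn N * 2 = N * (N + 1))%N by rewrite Mn_card card_pairs addn1.
  by rewrite -cardP -hM !natrM -mulf_div divff ?mulr1 // pnatr_eq0.
have a0 : forall p, p \in pairs N -> p \notin pairs_S S -> acoef g Kp p = 0.
  by move=> p pP pS; rewrite /acoef gz // expr0n !mul0r.
have sub : pairs_S S \subset pairs N by apply/subsetP => p; rewrite !inE => /andP [].
have e1 : pairs N :&: pairs_S S = pairs_S S by apply/setIidPr.
have SA : \sum_(p in pairs N) acoef g Kp p = \sum_(p in pairs_S S) acoef g Kp p.
  rewrite (big_setID (pairs_S S)) /= e1 [X in _ + X]big1 ?addr0 // => p; rewrite in_setD => /andP [h1 h2].
  by apply: a0.
have SZ : Zs g Kp = \sum_(p in pairs_S S) Num.sqrt (acoef g Kp p).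
  rewrite /Zs (big_setID (pairs_S S)) /= e1 [X in _ + X]big1 ?addr0 // => p; rewrite in_setD => /andP [h1 h2].
  by rewrite a0 ?sqrtr0.
have ag : forall p, 0 <= acoef g Kp p.
  move=> p; have /andP [h1 h2] := HK p.1 p.2; rewrite /acoef /Kp.
  by apply: mulr_ge0; [apply: mulr_ge0 => //; apply: sqr_ge0 | rewrite subr_ge0].
have Ssq : \sum_(p in pairs_S S) acoef g Kp p =
           \sum_(p in pairs_S S) (Num.sqrt (acoef g Kp p)) ^+ 2.
  by apply: eq_bigr => p _; rewrite sqr_sqrtr.
rewrite (@rho_eq R N g Kp B N1 B0 (lt0r_neq0 S0)).
have MS : 0 < (Mn N)%:R * \sum_(p in pairs N) acoef g Kp p :> R.
  by apply: mulr_gt0 => //; rewrite ltr0n.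
rewrite ler_pdivrMr //.
have -> : #|pairs_S S|%:R / (Mn N)%:R * ((Mn N)%:R * \sum_(p in pairs N) acoef g Kp p)
   = #|pairs_S S|%:R * \sum_(p in pairs_S S) acoef g Kp p :> R.
  by rewrite SA; field.
rewrite SZ Ssq; exact: cs_le.
Qed.

Theorem theorem1 :
  (forall (R : rcfType) (N : nat), (1 <= N)%N ->
   forall (g Kp : 'I_N * 'I_N -> R) (B : R),
   (forall p, p \in pairs N -> 0 <= Kp p <= 1) ->
   0 < \sum_(p in pairs N) acoef g Kp p ->
   0 < B ->
   rho g Kp B = Zs g Kp ^+ 2 / ((Mn N)%:R * \sum_(p in pairs N) acoef g Kp p)
   /\ rho g Kp B <= 1
   /\ (rho g Kp B = 1 <->
       (forall p q, p \in pairs N -> q \in pairs N -> acoef g Kp p = acoef g Kp q)))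
  /\
  (forall (R : rcfType) (N : nat), (1 <= N)%N ->
   forall (K : 'M[R]_N) (lam : R) (y : 'cV[R]_N) (B : R)
          (S : {set 'I_N}) (m : nat),
   K^T = K -> psd K ->
   (forall i j, 0 <= K i j <= 1) ->
   0 < lam ->
   let g := krr_grad K lam y in
   let Kp := fun p : 'I_N * 'I_N => K p.1 p.2 in
   0 < \sum_(p in pairs N) acoef g Kp p ->
   0 < B ->
   (forall i, krr_alpha K lam y i 0 != 0 -> i \in S) ->
   #|S| = m ->
   (forall p, p \in pairs N -> p \notin pairs_S S -> g p = 0)
   /\ (#|pairs_S S| * 2 = m * (2 * N - m + 1))%N
   /\ rho g Kp B <= #|pairs_S S|%:R / (Mn N)%:R
   /\ #|pairs_S S|%:R / (Mn N)%:R = (m * (2 * N - m + 1))%:R / (N * (N + 1))%:R :> R).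
Proof.
split; [exact: part1 | exact: part2].
Qed.
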